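(* Let $g\in\mathrm{O}(n)$ and let $1\le m<p\le n$. Write $g=\begin{pmatrix}P&Q\\ R&T\end{pmatrix}$ with blocks of sizes $(m+(n-m))\times(m+(n-m))$, assume $1+P$ is invertible, and set $\Upsilon^m(g)=T-R(1+P)^{-1}Q$. For a matrix $A$ let $[A]_k$ denote its upper left $k\times k$ corner. Then $$\det\big(1+[g]_p\big)=\det\big(1+[g]_m\big)\,\det\big(1+[\Upsilon^m(g)]_{p-m}\big).$$ *)

(* Defs.v *)
From HB Require Import structures.
From mathcomp Require Import all_boot all_order all_algebra.
Set Implicit Arguments. Unset Strict Implicit. Unset Printing Implicit Defensive.
Import GRing.Theory Num.Theory.
Local Open Scope ring_scope.

Definition orthogonal_mx (R : realFieldType) (n : nat) (g : 'M[R]_n) : Prop :=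
  g *m g^T = 1%:M.

Definition corner (R : Type) (n k : nat) (H : (k <= n)%N) (A : 'M[R]_n) : 'M[R]_k :=
  mxsub (widen_ord H) (widen_ord H) A.

Definition blockify (R : Type) (n m : nat) (H : (m <= n)%N) (g : 'M[R]_n)
  : 'M[R]_(m + (n - m)) :=
  castmx (esym (subnKC H), esym (subnKC H)) g.

Definition Upsilon (R : fieldType) (n m : nat) (H : (m <= n)%N) (g : 'M[R]_n)
  : 'M[R]_(n - m) :=
  let h := blockify H g in
  drsubmx h - dlsubmx h *m invmx (1%:M + ulsubmx h) *m ursubmx h.

(* Main.v *)
Require Import Defs.
From HB Require Import structures.
From mathcomp Require Import all_boot all_order all_algebra.
Import GRing.Theory Num.Theory.
Local Open Scope ring_scope.

Lemma schur_det {R : fieldType} {a b} {M : 'M[R]_(a + b)} :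
  ulsubmx M \in unitmx ->
  \det M = \det (ulsubmx M)
           * \det (drsubmx M - dlsubmx M *m invmx (ulsubmx M) *m ursubmx M).
Proof.
move=> Hu; rewrite -{1}(submxK M).
set A := ulsubmx M; set B := ursubmx M; set C := dlsubmx M; set D := drsubmx M.
have -> : block_mx A B C D = block_mx 1%:M 0 (C *m invmx A) 1%:M
   *m block_mx A B 0 (D - C *m invmx A *m B).
  rewrite mulmx_block !mul1mx !mul0mx ?mulmx0 ?addr0 ?add0r mulmxKV //.
  by rewrite addrC subrK.
by rewrite det_mulmx det_lblock det_ublock !det1 !mul1r.
Qed.

Lemma ul1D (R : ringType) a b (A : 'M[R]_(a + b)) :
  ulsubmx (1%:M + A) = 1%:M + ulsubmx A.
Proof.
have -> : ulsubmx (1%:M + A) = ulsubmx (1%:M : 'M[R]_(a + b)) + ulsubmx A.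
  by apply/matrixP=> i j; rewrite !mxE.
by rewrite [1%:M : 'M[R]_(a+b)]scalar_mx_block block_mxKul.
Qed.

Lemma dr1D (R : ringType) a b (A : 'M[R]_(a + b)) :
  drsubmx (1%:M + A) = 1%:M + drsubmx A.
Proof.
have -> : drsubmx (1%:M + A) = drsubmx (1%:M : 'M[R]_(a + b)) + drsubmx A.
  by apply/matrixP=> i j; rewrite !mxE.
by rewrite [1%:M : 'M[R]_(a+b)]scalar_mx_block block_mxKdr.
Qed.

Lemma dl1D (R : ringType) a b (A : 'M[R]_(a + b)) :
  dlsubmx (1%:M + A) = dlsubmx A.
Proof.
have -> : dlsubmx (1%:M + A) = dlsubmx (1%:M : 'M[R]_(a + b)) + dlsubmx A.
  by apply/matrixP=> i j; rewrite !mxE.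
by rewrite [1%:M : 'M[R]_(a+b)]scalar_mx_block block_mxKdl add0r.
Qed.

Lemma ur1D (R : ringType) a b (A : 'M[R]_(a + b)) :
  ursubmx (1%:M + A) = ursubmx A.
Proof.
have -> : ursubmx (1%:M + A) = ursubmx (1%:M : 'M[R]_(a + b)) + ursubmx A.
  by apply/matrixP=> i j; rewrite !mxE.
by rewrite [1%:M : 'M[R]_(a+b)]scalar_mx_block block_mxKur add0r.
Qed.

Lemma mxsubB (R : ringType) m n m' n' (f : 'I_m' -> 'I_m) (g : 'I_n' -> 'I_n)
  (A B : 'M[R]_(m, n)) : mxsub f g (A - B) = mxsub f g A - mxsub f g B.
Proof. by apply/matrixP=> i j; rewrite !mxE. Qed.

Theorem proposition2p4 (R : realFieldType) (n m p : nat) (g : 'M[R]_n)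
  (Hm : (m <= n)%N) (Hp : (p <= n)%N) (Hm1 : (1 <= m)%N) (Hmp : (m < p)%N) :
  orthogonal_mx g ->
  (1%:M + ulsubmx (blockify Hm g)) \in unitmx ->
  \det (1%:M + corner Hp g)
  = \det (1%:M + corner Hm g)
    * \det (1%:M + corner (leq_sub2r m Hp) (Upsilon Hm g)).
Proof.
move=> _; rewrite /Upsilon /blockify.
have ep := subnKC (ltnW Hmp).
move: (leq_sub2r m Hp) (subnKC Hm) ep.
move: (n - m)%N => l; move: (p - m)%N => k => H e ep.
subst n; subst p.
rewrite castmx_id => Hu.
have F1 : ulsubmx (corner Hp g) = ulsubmx g.
  by apply/matrixP=> i j; rewrite !mxE; congr (g _ _); apply: val_inj.
have F2 : corner Hm g = ulsubmx g.
  by apply/matrixP=> i j; rewrite !mxE; congr (g _ _); apply: val_inj.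
have F3 : drsubmx (corner Hp g) = corner H (drsubmx g).
  by apply/matrixP=> i j; rewrite !mxE; congr (g _ _); apply: val_inj.
have F4 : dlsubmx (corner Hp g) = rowsub (widen_ord H) (dlsubmx g).
  by apply/matrixP=> i j; rewrite !mxE; congr (g _ _); apply: val_inj.
have F5 : ursubmx (corner Hp g) = colsub (widen_ord H) (ursubmx g).
  by apply/matrixP=> i j; rewrite !mxE; congr (g _ _); apply: val_inj.
have Hu' : ulsubmx (1%:M + corner Hp g) \in unitmx by rewrite ul1D F1.
rewrite (schur_det Hu') ul1D dr1D dl1D ur1D F1 F2 F3 F4 F5.
congr (_ * \det _); rewrite /corner mxsubB mxsub_mul -mul_rowsub_mx.
by rewrite addrA.
Qed.
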